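(* Let $M>0$, let $f:[0,1]\to\mathbb{R}$ satisfy $|f(x)-f(y)|\le M|x-y|$ for all $x,y\in[0,1]$, and let $g(x)=f(x)\bmod 1\in[0,1)$. Let $n\ge 2$ be an integer and $x_i=\frac{i-1}{n-1}$ for $i=1,\dots,n$. Let $\delta\in[0,1/2]$ and let $\hat g:[0,1]\to[0,1)$ satisfy $d_w(\hat g(x_i),g(x_i))\le\delta$ for all $i$. For each $i$ let $\eta_i\in[-\delta,\delta]$ be such that $\hat g(x_i)=(f(x_i)+\eta_i)\bmod 1$, and set $\hat f(x_i):=f(x_i)+\eta_i$. If $2\delta+\frac{M}{n-1}<\frac12$, then for each $i=2,\dots,n$: $$\hat f(x_i)-\hat f(x_{i-1})=\begin{cases}\hat g(x_i)-\hat g(x_{i-1}) & \text{if } |\hat g(x_i)-\hat g(x_{i-1})|<1/2,\\ 1+\hat g(x_i)-\hat g(x_{i-1}) & \text{if } \hat g(x_i)-\hat g(x_{i-1})<-1/2,\\ -1+\hat g(x_i)-\hat g(x_{i-1}) & \text{if } \hat g(x_i)-\hat g(x_{i-1})>1/2.\end{cases}$$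
   Context: For $a\in\mathbb{R}$, $a\bmod 1\in[0,1)$ denotes $a-\lfloor a\rfloor$. The wrap-around distance on $[0,1)$ is $d_w(a,b)=\min(|a-b|,1-|a-b|)$. *)

(* Defs.v *)
From Stdlib Require Export Reals.
Open Scope R_scope.

(* a mod 1 = a - floor a ; Int_part a = up a - 1 is the floor of a. *)
Definition mod1 (a : R) : R := a - IZR (Int_part a).

Definition dw (a b : R) : R := Rmin (Rabs (a - b)) (1 - Rabs (a - b)).

Definition grid (n i : nat) : R := INR (i - 1) / INR (n - 1).

(* Main.v *)
Require Import Defs.
From Stdlib Require Import Reals Lra Lia.
Open Scope R_scope.

Lemma int_between (k : Z) (lo : Z) : IZR lo - 1 < IZR k < IZR lo + 1 -> k = lo.
Proof.
  intros [H1 H2].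
  rewrite <- minus_IZR in H1. rewrite <- plus_IZR in H2.
  apply lt_IZR in H1. apply lt_IZR in H2. lia.
Qed.

Theorem mainTheorem1
  (M : R) (f : R -> R) (n : nat) (delta : R) (ghat : R -> R) (eta : nat -> R) :
  0 < M ->
  (forall x y, 0 <= x <= 1 -> 0 <= y <= 1 -> Rabs (f x - f y) <= M * Rabs (x - y)) ->
  (2 <= n)%nat ->
  0 <= delta <= 1/2 ->
  (forall x, 0 <= x <= 1 -> 0 <= ghat x < 1) ->
  (forall i, (1 <= i <= n)%nat ->
     dw (ghat (grid n i)) (mod1 (f (grid n i))) <= delta) ->
  (forall i, (1 <= i <= n)%nat ->
     - delta <= eta i <= delta /\
     ghat (grid n i) = mod1 (f (grid n i) + eta i)) ->
  2 * delta + M / INR (n - 1) < 1/2 ->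
  forall i, (2 <= i <= n)%nat ->
    let fhat := fun j => f (grid n j) + eta j in
    let D := ghat (grid n i) - ghat (grid n (i - 1)) in
    (Rabs D < 1/2 -> fhat i - fhat (i - 1)%nat = D) /\
    (D < - (1/2) -> fhat i - fhat (i - 1)%nat = 1 + D) /\
    (D > 1/2 -> fhat i - fhat (i - 1)%nat = -1 + D).
Proof.
  intros HM Hf Hn Hd Hg _ Heta Hsmall i Hi.
  destruct i as [|[|j]]; [lia|lia|].
  replace (S (S j) - 1)%nat with (S j) by lia.
  intros fhat D.
  assert (Hpos : 0 < INR (n - 1)) by (apply lt_0_INR; lia).
  assert (Hle : INR (S j) <= INR (n - 1)) by (apply le_INR; lia).
  assert (Hg1 : 0 <= grid n (S (S j)) <= 1).
  { unfold grid. replace (S (S j) - 1)%nat with (S j) by lia.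
    pose proof (pos_INR (S j)).
    split; [unfold Rdiv; apply Rmult_le_pos; [lra|apply Rlt_le, Rinv_0_lt_compat; lra]|].
    apply (Rmult_le_reg_r (INR (n-1))); auto. unfold Rdiv.
    rewrite Rmult_assoc, Rinv_l by lra. lra. }
  assert (Hg2 : 0 <= grid n (S j) <= 1).
  { unfold grid. replace (S j - 1)%nat with j by lia.
    pose proof (pos_INR j). rewrite S_INR in Hle.
    split; [unfold Rdiv; apply Rmult_le_pos; [lra|apply Rlt_le, Rinv_0_lt_compat; lra]|].
    apply (Rmult_le_reg_r (INR (n-1))); auto. unfold Rdiv.
    rewrite Rmult_assoc, Rinv_l by lra. lra. }
  assert (Hdiff : grid n (S (S j)) - grid n (S j) = 1 / INR (n - 1)).
  { unfold grid. replace (S (S j) - 1)%nat with (S j) by lia.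
    replace (S j - 1)%nat with j by lia. rewrite S_INR. field. lra. }
  pose proof (Hf _ _ Hg1 Hg2) as Hfd. rewrite Hdiff in Hfd.
  rewrite (Rabs_pos_eq (1 / INR (n-1))) in Hfd by (unfold Rdiv; apply Rlt_le, Rmult_lt_0_compat; [lra|apply Rinv_0_lt_compat; lra]).
  replace (M * (1 / INR (n-1))) with (M / INR (n-1)) in Hfd by (field; lra).
  destruct (Heta (S (S j))) as [He1 Hq1]; [lia|].
  destruct (Heta (S j)) as [He2 Hq2]; [lia|].
  assert (Hab : Rabs (fhat (S (S j)) - fhat (S j)) < 1/2).
  { unfold fhat.
    replace (f (grid n (S (S j))) + eta (S (S j)) - (f (grid n (S j)) + eta (S j)))
      with ((f (grid n (S (S j))) - f (grid n (S j))) + (eta (S (S j)) - eta (S j))) by ring.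
    eapply Rle_lt_trans; [apply Rabs_triang|].
    assert (Rabs (eta (S (S j)) - eta (S j)) <= 2*delta) by (apply Rabs_le; lra).
    lra. }
  assert (HD : fhat (S (S j)) - fhat (S j) - D
               = IZR (Int_part (fhat (S (S j))) - Int_part (fhat (S j)))).
  { unfold D. rewrite Hq1, Hq2. unfold mod1, fhat. rewrite minus_IZR. ring. }
  set (m := (Int_part (fhat (S (S j))) - Int_part (fhat (S j)))%Z) in HD.
  pose proof (Hg _ Hg1). pose proof (Hg _ Hg2).
  apply Rabs_def2 in Hab.
  assert (HDb : -1 < D < 1) by (unfold D; lra).
  split; [|split]; intros HH.
  - apply Rabs_def2 in HH.
    assert (m = 0%Z) by (apply int_between; simpl; lra).
    subst m. rewrite H1 in HD. simpl in HD. lra.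
  - assert (m = 1%Z) by (apply int_between; simpl; lra).
    rewrite H1 in HD. simpl in HD. lra.
  - assert (m = (-1)%Z) by (apply int_between; simpl; lra).
    rewrite H1 in HD. simpl in HD. lra.
Qed.
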